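(* Let $f_{SA}(x)=\sqrt{\frac{x^2+1}{2}}-\frac{x+1}{2}$ for $x\in(0,\infty)$, let $f_{SA}^*(u)=u\,f_{SA}\!\left(\frac{1-u}{u}\right)$ for $u\in(0,1)$, extended by continuity to $[0,1]$ (explicitly $f_{SA}^*(u)=\frac12\left[\sqrt{2(u^2+(1-u)^2)}-1\right]$), and define $\overline M_{SA}(C_1,C_2)=E_X\{f_{SA}^*(P(C_2\mid x))\}$. Then $$P_e\le \frac12\left[1-\frac{2}{\sqrt2-1}\,\overline M_{SA}(C_1,C_2)\right].$$
   Context: Two-class decision problem: classes (hypotheses) $C_1,C_2$, an observation $x$ in a space $\mathrm X$ with density $p(x)$, and a posteriori probabilities $P(C_1\mid x),P(C_2\mid x)\ge0$ with $P(C_1\mid x)+P(C_2\mid x)=1$. $E_X\{g(x)\}=\int_{\mathrm X} g(x)p(x)\,dx$. $P_e=E_X\{\min(P(C_1\mid x),P(C_2\mid x))\}$ is the Bayesian probability of error. Equivalently $E_X\{f^*(P(C_2\mid x))\}=E_X\{f(P(C_1\mid x)/P(C_2\mid x))\,P(C_2\mid x)\}$. *)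

(* Defs.v *)
From HB Require Import structures.
From mathcomp Require Import all_boot all_order all_algebra.
From mathcomp Require Import all_classical all_reals all_analysis.
Set Implicit Arguments. Unset Strict Implicit. Unset Printing Implicit Defensive.
Import Order.TTheory GRing.Theory Num.Theory.
Local Open Scope ring_scope.

Definition EX (R : realType) (d : measure_display) (T : measurableType d)
  (mu : {measure set T -> \bar R}) (p : T -> R) (g : T -> R) : \bar R :=
  (\int[mu]_(x in setT) (g x * p x)%:E)%E.

Definition f_SA (R : realType) (x : R) : R :=
  Num.sqrt ((x ^+ 2 + 1) / 2) - (x + 1) / 2.

Definition f_SA_star (R : realType) (u : R) : R :=
  (Num.sqrt (2 * (u ^+ 2 + (1 - u) ^+ 2)) - 1) / 2.

(* Bayesian probability of error P_e = E_X{min(P(C1|x), P(C2|x))}. *)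
Definition Pe (R : realType) (d : measure_display) (T : measurableType d)
  (mu : {measure set T -> \bar R}) (p P1 P2 : T -> R) : \bar R :=
  EX mu p (fun x => Num.min (P1 x) (P2 x)).

Definition M_SA (R : realType) (d : measure_display) (T : measurableType d)
  (mu : {measure set T -> \bar R}) (p P2 : T -> R) : \bar R :=
  EX mu p (fun x => f_SA_star (P2 x)).

(* Main.v *)
Require Import Defs.
From HB Require Import structures.
From mathcomp Require Import all_boot all_order all_algebra.
From mathcomp Require Import all_classical all_reals all_analysis.
From mathcomp Require Import ring lra.
Import measurable_realfun.
Import Order.TTheory GRing.Theory Num.Theory.
Local Open Scope ring_scope.

Lemma key (R : rcfType) (t : R) : 0 <= t -> t <= 1/2 ->
  Num.sqrt (2 * (t ^+ 2 + (1 - t) ^+ 2)) <= Num.sqrt 2 - 2 * (Num.sqrt 2 - 1) * t.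
Proof.
move=> t0 t1.
set s := Num.sqrt 2.
have s2 : s ^+ 2 = 2 by rewrite sqr_sqrtr.
have s1 : 1 <= s by rewrite -sqrtr1 ler_sqrt // ler1n.
have pos : 0 <= s - 2 * (s - 1) * t by nra.
rewrite -[X in _ <= X]ger0_norm // -sqrtr_sqr ler_sqrt ?sqr_ge0 //.
have h : 0 <= (s - 1) * t * (1 - 2 * t).
  by apply: mulr_ge0; [apply: mulr_ge0; lra | lra].
have e : (s - 2 * (s - 1) * t) ^+ 2 - 2 * (t ^+ 2 + (1 - t) ^+ 2) = 4 * ((s - 1) * t * (1 - 2 * t)).
  apply/eqP; rewrite -subr_eq0; apply/eqP.
  have -> : (s - 2 * (s - 1) * t) ^+ 2 - 2 * (t ^+ 2 + (1 - t) ^+ 2) - 4 * ((s - 1) * t * (1 - 2 * t)) = (s ^+ 2 - 2) * (1 - 2 * t) ^+ 2 by ring.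
  by rewrite s2 subrr mul0r.
by rewrite -subr_ge0 e mulr_ge0.
Qed.

Lemma pw (R : rcfType) (u : R) : 0 <= u -> u <= 1 ->
  Num.min (1 - u) u + (Num.sqrt (2 * (u ^+ 2 + (1 - u) ^+ 2)) - 1) / 2 / (Num.sqrt 2 - 1) <= 1/2.
Proof.
move=> u0 u1.
have s1 : 1 < Num.sqrt (2:R) by rewrite -[X in X < _]sqrtr1 ltr_sqrt //; lra.
have gen : forall t : R, 0 <= t -> t <= 1/2 -> (u = t \/ u = 1 - t) ->
   t + (Num.sqrt (2 * (u ^+ 2 + (1 - u) ^+ 2)) - 1) / 2 / (Num.sqrt 2 - 1) <= 1/2.
  move=> t t0 t1 ht.
  have -> : u ^+ 2 + (1 - u) ^+ 2 = t ^+ 2 + (1 - t) ^+ 2.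
    by case: ht => ->; ring.
  have k := @key R t t0 t1.
  rewrite -[X in _ <= X](subrK t) addrC lerD2r.
  rewrite ler_pdivrMr ?subr_gt0 //.
  nra.
rewrite /Num.min /Num.Def.minr; case: ifPn => h.
  apply: gen; [lra|lra|right; ring].
rewrite -leNgt in h.
apply: gen; [lra|lra|by left].
Qed.

Lemma fstar_ge0 (R : realType) (u : R) : 0 <= f_SA_star u.
Proof.
rewrite /f_SA_star; apply: divr_ge0; last lra.
have h := sqr_ge0 (2 * u - 1).
have h1 := sqr_ge0 u; have h2 := sqr_ge0 (1 - u).
rewrite subr_ge0 -[X in X <= _]sqrtr1 ler_sqrt; nra.
Qed.

Lemma lastep (R : realType) (K B : \bar R) (s : R) : 1 < s -> (0 <= K)%E -> (0 <= B)%E ->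
  (K + ((s - 1)^-1)%:E * B <= (1/2)%:E)%E ->
  (K <= (1 / 2 : R)%:E * (1 - (2 / (s - 1) : R)%:E * B))%E.
Proof.
move=> s1; case: K => [k| |] //; case: B => [b| |] // k0 b0.
- rewrite -EFinM -EFinD !lee_fin => H.
  rewrite !lee_fin in k0 b0.
  have -> : 1 / 2 * (1 - 2 / (s - 1) * b) = 1/2 - (s - 1)^-1 * b.
    by field; lra.
  nra.
- rewrite gt0_muley ?lte_fin ?invr_gt0 ?subr_gt0 // addey //.
- rewrite addye //; rewrite ?gt0_muley ?lte_fin ?invr_gt0 ?subr_gt0 //.
Qed.

Theorem mainTheorem1 (R : realType) (d : measure_display) (T : measurableType d)
  (mu : {measure set T -> \bar R}) (p P1 P2 : T -> R) :
  measurable_fun setT p ->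
  (forall x, 0 <= p x) ->
  (\int[mu]_(x in setT) (p x)%:E = 1)%E ->
  measurable_fun setT P1 -> measurable_fun setT P2 ->
  (forall x, 0 <= P1 x) -> (forall x, 0 <= P2 x) ->
  (forall x, P1 x + P2 x = 1) ->
  (Pe mu p P1 P2 <=
     (1 / 2 : R)%:E * (1 - (2 / (Num.sqrt 2 - 1) : R)%:E * M_SA mu p P2))%E.
Proof.
move=> mp p0 p1 mP1 mP2 P10 P20 P12.
have s1 : 1 < Num.sqrt (2:R) by rewrite -[X in X < _]sqrtr1 ltr_sqrt //; lra.
set c := (Num.sqrt (2:R) - 1)^-1.
have c0 : 0 <= c by rewrite /c invr_ge0; lra.
have mf : measurable_fun setT (fun x => f_SA_star (P2 x)).
  rewrite /f_SA_star.
  apply: measurable_funM => //.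
  apply: measurable_funB => //.
  apply: measurableT_comp; first exact: continuous_measurable_fun (@sqrt_continuous R).
  apply: measurable_funM => //.
  apply: measurable_funD; first exact: measurable_funX.
  apply: measurable_funX.
  exact: measurable_funB.
have mmin : measurable_fun setT (fun x => Num.min (P1 x) (P2 x)).
  exact: measurable_minr.
have min0 : forall x, 0 <= Num.min (P1 x) (P2 x).
  by move=> x; rewrite /Num.min /Num.Def.minr; case: ifP.
have mk : measurable_fun setT (fun x => (Num.min (P1 x) (P2 x) * p x)%:E).
  by apply/measurable_EFinP; apply: measurable_funM.
have mh : measurable_fun setT (fun x => (f_SA_star (P2 x) * p x)%:E).
  by apply/measurable_EFinP; apply: measurable_funM.
apply: lastep => //.
- by apply: integral_ge0 => x _; rewrite lee_fin mulr_ge0.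
- by apply: integral_ge0 => x _; rewrite lee_fin mulr_ge0 ?fstar_ge0.
rewrite /Pe /M_SA /EX.
rewrite -ge0_integralZl_EFin //; last first.
  by move=> x _; rewrite lee_fin mulr_ge0 ?fstar_ge0.
rewrite -ge0_integralD //; first last.
- by apply: emeasurable_funM => //; exact: measurable_cst.
- by move=> x _; rewrite mule_ge0 // lee_fin mulr_ge0 ?fstar_ge0.
- by move=> x _; rewrite lee_fin mulr_ge0.
have -> : ((1 / 2)%:E = (1 / 2 : R)%:E * \int[mu]_(x in setT) (p x)%:E)%E.
  by rewrite p1 mule1.
rewrite -ge0_integralZl_EFin //; last first.
- by apply/measurable_EFinP.
- by move=> x _; rewrite lee_fin.
apply: ge0_le_integral => //.
- by move=> x _; rewrite adde_ge0 // ?mule_ge0 // lee_fin mulr_ge0 ?fstar_ge0.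
- apply: emeasurable_funD => //.
  by apply: emeasurable_funM => //; exact: measurable_cst.
- by apply/measurable_EFinP; apply: measurable_funM => //; exact: measurable_cst.
move=> x _.
rewrite -EFinM -EFinD lee_fin.
have -> : P1 x = 1 - P2 x by rewrite -(P12 x) addrK.
have := @pw R (P2 x) (P20 x).
have h2 : P2 x <= 1 by rewrite -(P12 x) lerDr.
move=> /(_ h2) H.
rewrite mulrA -mulrDl.
apply: ler_wpM2r => //.
by move: H; rewrite /f_SA_star /c [_^-1 * _]mulrC.
Qed.
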